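(* Let $G$ be a torsion-free abelian group, let $\mathfrak{F}$ be a set freely generating a free group $\langle\mathfrak{F}\rangle$, and let $\pi:\mathfrak{F}\to\mathrm{pAut}\,G$ be a map, extended to reduced words as follows: for a reduced word $\varphi=\varphi_1\cdots\varphi_n$ with $\varphi_i\in\mathfrak{F}\cup\mathfrak{F}^{-1}$ put $\pi(\varphi)=\pi(\varphi_1)\cdots\pi(\varphi_n)$ (composition of partial automorphisms, with $\pi(\psi^{-1})=\pi(\psi)^{-1}$ the weak inverse, and $\pi(1)=\mathrm{id}_G$ for the empty word). Then $\pi$ has the U-property if and only if every reduced $\varphi\in\langle\mathfrak{F}\rangle$ such that $x\pi(\varphi)=x$ for some $x\in\mathrm{Dom}\,\pi(\varphi)\cap{\mathfrak p}G$ satisfies $\varphi=1$.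
   Context: A partial automorphism of $G$ is an isomorphism $\varphi:\mathrm{Dom}\,\varphi\to\mathrm{Im}\,\varphi$ between subgroups of $G$, acting on the right; $\mathrm{pAut}\,G$ is the set of partial automorphisms with $G/\mathrm{Dom}\,\varphi$ and $G/\mathrm{Im}\,\varphi$ both $\aleph_1$-free (every countable subgroup free). Composition: $\mathrm{Dom}(\varphi\psi)=(\mathrm{Im}\,\varphi\cap\mathrm{Dom}\,\psi)\varphi^{-1}$, $x(\varphi\psi)=(x\varphi)\psi$; the weak inverse $\varphi^{-1}$ is the inverse isomorphism $\mathrm{Im}\,\varphi\to\mathrm{Dom}\,\varphi$. ${\mathfrak p}G$ is the set of nonzero $g\in G$ such that $nx=g$ has no solution $x\in G$ for any integer $n\ge2$. $\pi$ has the U-property if for all reduced $\varphi,\varphi'\in\langle\mathfrak{F}\rangle$ with $x\pi(\varphi)=x\pi(\varphi')$ for some $x\in\mathrm{Dom}\,\pi(\varphi)\cap\mathrm{Dom}\,\pi(\varphi')\cap{\mathfrak p}G$ we have $\varphi=\varphi'$. *)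

(* Defs.v *)
From mathcomp Require Import all_boot all_order all_algebra.
Set Implicit Arguments. Unset Strict Implicit. Unset Printing Implicit Defensive.
Import GRing.Theory.
Local Open Scope ring_scope.

Definition torsion_free (G : zmodType) : Prop :=
  forall (x : G) (n : nat), (0 < n)%N -> x *+ n = 0 -> x = 0.

Definition is_subgroup (G : zmodType) (K : G -> Prop) : Prop :=
  K 0 /\ forall x y, K x -> K y -> K (x - y).

(* The quotient K/H (H <= K) is countable. *)
Definition countable_mod (G : zmodType) (K H : G -> Prop) : Prop :=
  exists s : nat -> G, forall k, K k -> exists n, H (k - s n).

(* The quotient K/H (H <= K) is a free abelian group: there is a set B of
   elements of K whose cosets form a Z-basis of K/H. *)
Definition free_mod (G : zmodType) (K H : G -> Prop) : Prop :=
  exists B : G -> Prop,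
    (forall b, B b -> K b) /\
    (forall (l : seq G) (c : G -> int),
        uniq l -> (forall b, b \in l -> B b) ->
        H (\sum_(b <- l) b *~ c b) -> forall b, b \in l -> c b = 0) /\
    (forall k, K k -> exists (l : seq G) (c : G -> int),
        (forall b, b \in l -> B b) /\ H (k - \sum_(b <- l) b *~ c b)).

(* G/H is aleph_1-free: every countable subgroup of G/H (i.e. K/H with
   H <= K <= G, K/H countable) is free. *)
Definition aleph1_free_quot (G : zmodType) (H : G -> Prop) : Prop :=
  forall K : G -> Prop, is_subgroup K -> (forall h, H h -> K h) ->
    countable_mod K H -> free_mod K H.

(* Partial maps G -> G represented by their graphs (acting on the right). *)
Definition prel (G : zmodType) := G -> G -> Prop.

Definition Dom (G : zmodType) (R : prel G) : G -> Prop := fun x => exists y, R x y.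
Definition Im (G : zmodType) (R : prel G) : G -> Prop := fun y => exists x, R x y.

Definition is_partial_iso (G : zmodType) (R : prel G) : Prop :=
  [/\ forall x y y', R x y -> R x y' -> y = y',
      forall x x' y, R x y -> R x' y -> x = x',
      R 0 0 &
      forall x y x' y', R x y -> R x' y' -> R (x - x') (y - y')].

Definition is_pAut (G : zmodType) (R : prel G) : Prop :=
  [/\ is_partial_iso R, aleph1_free_quot (Dom R) & aleph1_free_quot (Im R)].

Definition pcomp (G : zmodType) (R S : prel G) : prel G :=
  fun x z => exists y, R x y /\ S y z.
Definition pinv (G : zmodType) (R : prel G) : prel G := fun y x => R x y.
Definition pid (G : zmodType) : prel G := fun x y => x = y.

Definition pG (G : zmodType) (g : G) : Prop :=
  g <> 0 /\ forall (n : nat) (x : G), (2 <= n)%N -> x *+ n <> g.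

(* Words over F ∪ F^{-1}: (f, false) is f, (f, true) is f^{-1}. *)
Fixpoint reduced (F : Type) (w : seq (F * bool)) : Prop :=
  match w with
  | [::] => True
  | a :: w' =>
      match w' with
      | [::] => True
      | b :: _ => ~ (a.1 = b.1 /\ a.2 <> b.2) /\ reduced w'
      end
  end.

Definition letter (F : Type) (G : zmodType) (pi : F -> prel G) (a : F * bool)
  : prel G := if a.2 then pinv (pi a.1) else pi a.1.

Fixpoint pi_word (F : Type) (G : zmodType) (pi : F -> prel G)
  (w : seq (F * bool)) : prel G :=
  match w with
  | [::] => @pid G
  | a :: w' => pcomp (letter pi a) (pi_word pi w')
  end.

Definition U_property (F : Type) (G : zmodType) (pi : F -> prel G) : Prop :=
  forall phi phi' : seq (F * bool), reduced phi -> reduced phi' ->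
    (exists x y, pG x /\ pi_word pi phi x y /\ pi_word pi phi' x y) ->
    phi = phi'.

(* Main.v *)
Require Import Defs.
From mathcomp Require Import all_boot all_order all_algebra.
From Stdlib Require Import Classical.

Section Aux.
Variables (G : zmodType) (F : Type) (pi : F -> prel G).

Definition inva (a : F * bool) : F * bool := (a.1, ~~ a.2).
Fixpoint winv (w : seq (F * bool)) : seq (F * bool) :=
  match w with [::] => [::] | a :: w' => winv w' ++ [:: inva a] end.

Definition bad (a b : F * bool) : Prop := a.1 = b.1 /\ a.2 <> b.2.
Definition okh (c : F * bool) (w : seq (F * bool)) : Prop :=
  match w with [::] => True | d :: _ => ~ bad c d end.

Lemma reduced_cons c w : reduced (c :: w) <-> okh c w /\ reduced w.
Proof. by case: w => [|d w] //=; split => // [[]]. Qed.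

Lemma okh_cat c x y : x <> [::] -> (okh c (x ++ y) <-> okh c x).
Proof. by case: x. Qed.

Lemma reduced_cat l1 a b l2 : reduced (rcons l1 a) -> reduced (b :: l2) ->
  ~ bad a b -> reduced (rcons l1 a ++ b :: l2).
Proof.
elim: l1 => [|c l1 IH] H1 H2 H3.
  by change (reduced (a :: b :: l2)); apply/reduced_cons; split.
change (reduced (c :: rcons l1 a)) in H1.
change (reduced (c :: (rcons l1 a ++ b :: l2))).
move/reduced_cons: H1 => [Ho Hr].
apply/reduced_cons; split; last by apply: IH.
apply/okh_cat => //. by case: (l1).
Qed.

Lemma reduced_catl (l1 l2 : seq (F * bool)) : reduced (l1 ++ l2) -> reduced l1.
Proof.
elim: l1 => [|c l1 IH] // /reduced_cons [Ho /IH Hr]; apply/reduced_cons; split => //.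
by case: l1 Ho {IH Hr}.
Qed.

Lemma winv_rcons p a : winv (rcons p a) = inva a :: winv p.
Proof. by elim: p => [|c p IH] //=; rewrite IH. Qed.

Lemma reduced_winv w : reduced w -> reduced (winv w).
Proof.
elim: w => [|a w IH] //= /reduced_cons [Ho Hr].
case: w IH Ho Hr => [|b w] IH Ho Hr //=.
have := IH Hr; rewrite /= cats1 => H.
rewrite cats1.
rewrite -cats1; apply: reduced_cat => //.
move=> [E1 E2]; apply: Ho; split => //.
by move: E2; rewrite /inva /=; case: (a.2); case: (b.2).
Qed.

Lemma pi_word_cat u v x z : pi_word pi (u ++ v) x z <->
  exists y, pi_word pi u x y /\ pi_word pi v y z.
Proof.
elim: u x => [|a u IH] x /=.
  split; first by move=> H; exists x.
  by move=> [y [-> H]].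
split.
  move=> [w [Hl /IH [y [H1 H2]]]]; exists y; split => //; by exists w.
move=> [y [[w [Hl H1]] H2]]; exists w; split => //; apply/IH; by exists y.
Qed.

Lemma letter_inva a x y : letter pi a x y -> letter pi (inva a) y x.
Proof. by case: a => f []. Qed.

Lemma pi_word_winv w x y : pi_word pi w x y -> pi_word pi (winv w) y x.
Proof.
elim: w x => [|a w IH] x /=; first by move=> ->.
move=> [w0 [Hl Hw]]; apply/pi_word_cat; exists w0; split; first exact: IH.
exists x; split => //; exact: letter_inva.
Qed.

Lemma letter_inj (hpi : forall f, is_pAut (pi f)) a y y' z :
  letter pi a y z -> letter pi a y' z -> y = y'.
Proof.
case: a => f b; have [[H1 H2 _ _] _ _] := hpi f; rewrite /letter /=.
case: b => /=; rewrite /pinv; [exact: H1 | exact: H2].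
Qed.

End Aux.
Arguments winv {F}.
Arguments inva {F}.
Arguments bad {F}.
Arguments okh {F}.

Theorem proposition3p10 (G : zmodType) (F : Type) (pi : F -> prel G)
  (hG : torsion_free G) (hpi : forall f, is_pAut (pi f)) :
  U_property pi <->
  (forall phi : seq (F * bool), reduced phi ->
     (exists x, pG x /\ pi_word pi phi x x) -> phi = [::]).
Proof.
split.
  move=> HU phi Hr [x [Hx Hw]]; apply: (HU phi [::]) => //.
  by exists x, x.
move=> H phi phi' Hr Hr' [x [y [Hx [H1 H2]]]].
elim/last_ind: phi phi' y Hr Hr' H1 H2 => [|p a IH] phi' y Hr Hr' H1 H2.
  case/lastP: phi' Hr' H2 => [|p' a'] // Hr' H2.
  rewrite /= /pid in H1; subst y.
  by have := H _ Hr' (ex_intro _ x (conj Hx H2)); case: (p').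
case/lastP: phi' Hr' H2 => [|p' a'] Hr' H2.
  rewrite /= /pid in H2; subst y.
  by have := H _ Hr (ex_intro _ x (conj Hx H1)); case: (p).
move: H1 H2; rewrite -!cats1 => /pi_word_cat [z [Hz1 Hz2]] /pi_word_cat [z' [Hz1' Hz2']].
case: (classic (a = a')) => [Ea | Na].
  subst a'.
  move: Hz2 Hz2' => /= [t [Ht Et]] [t' [Ht' E]]; rewrite /pid in Et E; subst t t'.
  have Ez := @letter_inj G F pi hpi _ _ _ _ Ht Ht'; subst z'.
  have Rp : reduced p.
    by move: Hr; rewrite -cats1; apply: reduced_catl.
  have Rp' : reduced p'.
    by move: Hr'; rewrite -cats1; apply: reduced_catl.
  by rewrite (IH p' z Rp Rp' Hz1 Hz1').
exfalso.
have Hw : pi_word pi (rcons p a ++ winv (rcons p' a')) x x.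
  apply/pi_word_cat; exists y; split.
    by rewrite -cats1; apply/pi_word_cat; exists z.
  apply: pi_word_winv; rewrite -cats1; apply/pi_word_cat; by exists z'.
have Rw : reduced (rcons p a ++ winv (rcons p' a')).
  rewrite winv_rcons; apply: reduced_cat => //.
    by rewrite -winv_rcons; apply: reduced_winv.
  move=> [E1 E2]; apply: Na; move: E1 E2; clear; case: a => f b; case: a' => f' b'; rewrite /inva /= => -> E2.
  by case: b E2; case: b' => // E2; exfalso; apply: E2.
have := H _ Rw (ex_intro _ x (conj Hx Hw)).
by case: (p).
Qed.
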